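(* Let $V$ be a finite set and $\mathcal{F}\subseteq 2^V$ a minimal hereditary family with $\delta(\mathcal{F})\ge 12$. Then every $4$-element set $Q\in\mathcal{F}$ contains at most three mini-weight vertices.
   Context: A family $\mathcal{F}\subseteq 2^V$ is hereditary if $F'\subseteq F\in\mathcal{F}$ implies $F'\in\mathcal{F}$. For $x\in V$: $\mathcal{F}(x)=\{F\setminus\{x\}: x\in F\in\mathcal{F}\}$, $d_{\mathcal{F}}(x)=|\mathcal{F}(x)|$, $\delta(\mathcal{F})=\min_{x\in V}d_{\mathcal{F}}(x)$. A set $F\in\mathcal{F}$ is maximal if no other member strictly contains it; a hereditary $\mathcal{F}$ with $\delta(\mathcal{F})\ge 12$ is minimal if $\delta(\mathcal{F}\setminus\{F\})\le 11$ for every maximal $F\in\mathcal{F}$. $f_i(x)$ denotes the number of $i$-element sets in $\mathcal{F}(x)$. A vertex $x$ is mini-weight if $f_1(x)=4$, $f_2(x)=5$, $f_3(x)=2$. *)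

(* Defs.v *)
From mathcomp Require Import all_boot.
Set Implicit Arguments. Unset Strict Implicit. Unset Printing Implicit Defensive.

Definition hereditary (V : finType) (F : {set {set V}}) : Prop :=
  forall A B : {set V}, A \in F -> B \subset A -> B \in F.

Definition link (V : finType) (F : {set {set V}}) (x : V) : {set {set V}} :=
  [set A :\ x | A in [set A in F | x \in A]].

Definition deg (V : finType) (F : {set {set V}}) (x : V) : nat := #|link F x|.

Definition min_deg_ge (V : finType) (F : {set {set V}}) (k : nat) : Prop :=
  forall x : V, k <= deg F x.

Definition min_deg_le (V : finType) (F : {set {set V}}) (k : nat) : Prop :=
  exists x : V, deg F x <= k.

Definition maximal_in (V : finType) (F : {set {set V}}) (A : {set V}) : Prop :=
  A \in F /\ forall B : {set V}, B \in F -> A \proper B -> False.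

Definition minimal12 (V : finType) (F : {set {set V}}) : Prop :=
  hereditary F /\ min_deg_ge F 12 /\
  forall A : {set V}, maximal_in F A -> min_deg_le (F :\ A) 11.

Definition fcount (V : finType) (F : {set {set V}}) (x : V) (i : nat) : nat :=
  #|[set B in link F x | #|B| == i]|.

Definition mini_weight (V : finType) (F : {set {set V}}) (x : V) : bool :=
  [&& fcount F x 1 == 4, fcount F x 2 == 5 & fcount F x 3 == 2].

(* Main.v *)
Require Import Defs.
From mathcomp Require Import all_boot.
From mathcomp Require Import zify.

Lemma inlink (V : finType) (F : {set {set V}}) x B :
  (B \in link F x) = (x \notin B) && (x |: B \in F).
Proof.
rewrite /link; apply/imsetP/andP.
- case=> A; rewrite inE => /andP[AF xA] ->; split; first by rewrite !inE eqxx.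
  by rewrite setD1K.
- case=> xB BF; exists (x |: B); first by rewrite inE BF setU11.
  by rewrite setU1K.
Qed.

Lemma L2 (V : finType) (F : {set {set V}}) x A B C :
  mini_weight F x -> A \in F -> B \in F -> C \in F ->
  x \in A -> x \in B -> x \in C -> #|A| = 4 -> #|B| = 4 -> #|C| = 4 ->
  A != B -> A != C -> B = C.
Proof.
move=> /and3P[_ _ /eqP h3] AF BF CF xA xB xC cA cB cC nAB nAC.
set L3 := [set D in link F x | #|D| == 3].
have inL : forall D, D \in F -> x \in D -> #|D| = 4 -> D :\ x \in L3.
  move=> D DF xD cD; rewrite inE inlink !inE eqxx /= setD1K // DF /=.
  by move: cD; rewrite (cardsD1 x D) xD /= => ?; apply/eqP; lia.
have inj : forall D E : {set V}, x \in D -> x \in E -> D :\ x = E :\ x -> D = E.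
  by move=> D E xD xE h; rewrite -(setD1K xD) -(setD1K xE) h.
apply/eqP; apply/negPn/negP => nBC.
have n1 : A :\ x != B :\ x by apply: contra nAB => /eqP /inj ->.
have n2 : A :\ x != C :\ x by apply: contra nAC => /eqP /inj ->.
have n3 : B :\ x != C :\ x by apply: contra nBC => /eqP /inj ->.
have sub : (A :\ x) |: ((B :\ x) |: [set C :\ x]) \subset L3.
  by apply/subsetP => D /setU1P[->|/setU1P[->|/set1P->]]; apply: inL.
have := subset_leq_card sub.
rewrite [#|L3|]h3 cardsU1 cardsU1 cards1 !inE (negbTE n1) (negbTE n2) (negbTE n3).
by [].
Qed.

Lemma L1 (V : finType) (F : {set {set V}}) x Q :
  hereditary F -> mini_weight F x -> Q \in F -> x \in Q -> #|Q| = 4 ->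
  exists S, [/\ S \in F, x \in S, #|S| = 4 & #|S :&: Q| = 3].
Proof.
move=> her /and3P[_ /eqP h2 /eqP h3] QF xQ cQ.
rewrite /fcount in h2 h3.
set L3 := [set D in link F x | #|D| == 3].
have cQx : #|Q :\ x| = 3 by move: cQ; rewrite (cardsD1 x Q) xQ /=; lia.
have QL : Q :\ x \in L3 by rewrite inE inlink !inE eqxx /= setD1K // QF cQx.
have : ~~ (L3 \subset [set Q :\ x]).
  apply/negP => sub; have := subset_leq_card sub; by rewrite cards1 h3.
case/subsetPn => T TL; rewrite inE => TnQ.
move: TL; rewrite inE inlink => /andP[/andP[xT xTF] /eqP cT].
set P2 := fun A : {set V} => [set B : {set V} | B \subset A & #|B| == 2].
have cP2 : forall A : {set V}, #|A| = 3 -> #|P2 A| = 3.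
  by move=> A cA; rewrite /P2 cards_draws cA.
set L2s := [set D in link F x | #|D| == 2].
have P2sub : forall A : {set V}, x \notin A -> x |: A \in F -> P2 A \subset L2s.
  move=> A xA AF; apply/subsetP => B; rewrite !inE => /andP[BA ->].
  rewrite andbT inlink; apply/andP; split.
    by apply: contra xA; apply: (subsetP BA).
  by apply: her AF _; apply: setUS.
have xQx : x \notin Q :\ x by rewrite !inE eqxx.
have ge2 : 2 <= #|T :&: Q|.
  rewrite leqNgt; apply/negP => lt2.
  have dis : P2 T :&: P2 (Q :\ x) = set0.
    apply/setP => B; rewrite !inE; apply/negP => /andP[/andP[BT /eqP cB] /andP[BQ _]].
    have : B \subset T :&: Q.
      rewrite subsetI BT /=; apply: subset_trans BQ _; exact: subsetDl.
    move/subset_leq_card; rewrite cB; lia.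
  have := cardsUI (P2 T) (P2 (Q :\ x)); rewrite dis cards0 addn0 !cP2 //.
  have sub : P2 T :|: P2 (Q :\ x) \subset L2s.
    by rewrite subUset !P2sub // setD1K.
  have := subset_leq_card sub; rewrite h2; lia.
have ne3 : #|T :&: Q| != 3.
  apply/negP => /eqP c3.
  have TQ : T \subset Q.
    have : T :&: Q == T by rewrite eqEcard subsetIl c3 cT.
    by move/eqP => <-; apply: subsetIr.
  have : T == Q :\ x by rewrite eqEcard subsetD1 TQ xT cQx cT /=.
  by rewrite (negbTE TnQ).
have le3 : #|T :&: Q| <= 3 by rewrite -cT subset_leq_card // subsetIl.
exists (x |: T); split => //; first by rewrite setU11.
  by rewrite cardsU1 xT cT.
have -> : (x |: T) :&: Q = x |: (T :&: Q).
  apply/setP => y; rewrite !inE; case: eqP => [->|] //=; by rewrite xQ.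
rewrite cardsU1 inE (negbTE xT) /=; move: ge2 ne3 le3; lia.
Qed.

Theorem mainTheorem7 (V : finType) (F : {set {set V}}) :
  hereditary F -> min_deg_ge F 12 -> minimal12 F ->
  forall Q : {set V}, Q \in F -> #|Q| = 4 ->
  #|[set x in Q | mini_weight F x]| <= 3.
Proof.
move=> her _ _ Q QF cQ.
rewrite leqNgt; apply/negP => H4.
set M := [set x in Q | mini_weight F x].
have subM : M \subset Q by apply/subsetP => y; rewrite inE => /andP[].
have MQ : M = Q by apply/eqP; rewrite eqEcard subM cQ.
have mw : forall y, y \in Q -> mini_weight F y.
  by move=> y; rewrite -MQ inE => /andP[].
have : 0 < #|Q| by rewrite cQ.
rewrite card_gt0 => /set0Pn [a aQ].
have [S [SF aS cS cSQ]] := @L1 V F _ Q her (mw a aQ) QF aQ cQ.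
have : 0 < #|Q :\: S|.
  have := cardsID S Q; rewrite setIC cSQ cQ; lia.
rewrite card_gt0 => /set0Pn [w]; rewrite inE => /andP[wS wQ].
have [S' [S'F wS' cS' cS'Q]] := @L1 V F _ Q her (mw w wQ) QF wQ cQ.
have : 0 < #|(S :&: Q) :&: (S' :&: Q)|.
  have := cardsUI (S :&: Q) (S' :&: Q).
  have sub : (S :&: Q) :|: (S' :&: Q) \subset Q by rewrite subUset !subsetIr.
  have := subset_leq_card sub; rewrite cQ cSQ cS'Q; lia.
rewrite card_gt0 => /set0Pn [p]; rewrite !inE => /andP[/andP[pS pQ] /andP[pS' _]].
have nQS : Q != S by apply/negP => /eqP QS; move: wS; rewrite -QS wQ.
have nQS' : Q != S' by apply/negP => /eqP QS; move: cS'Q; rewrite -QS setIid cQ.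
have := @L2 V F p Q S S' (mw p pQ) QF SF S'F pQ pS pS' cQ cS cS' nQS nQS'.
by move=> E; move: wS; rewrite E wS'.
Qed.
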